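(* Let $R$ be any nonempty set of reward functions $r':\mathcal{S}\times\mathcal{A}\to\mathbb{R}$. Then there exists a (time-indexed) reward function $r=(r_t)_{t=1}^T$ with $r_t:\mathcal{S}\times\mathcal{A}\to[-\infty,\infty)$ such that $$\arg\max_{\pi\in\Pi}J(\pi,r)\subseteq\arg\max_{\pi\in\Pi}\ \inf_{r'\in R}\mathbb{E}_\pi\Big[\sum_{t=1}^T r'(s_t,a_t)\Big].$$
   Context: Finite-horizon MDP: finite state set $\mathcal{S}$, finite action set $\mathcal{A}$, horizon $T\ge1$, initial distribution $p_1$, transition kernel $p(s'\mid s,a)$. $\Pi$ is the set of Markov (possibly time-dependent) policies $\pi=(\pi_t(\cdot\mid s))_{t=1}^T$, with $\pi(a_t\mid s_t)$ meaning $\pi_t(a_t\mid s_t)$; $\mathbb{E}_\pi$ is expectation over trajectories generated by $\pi$. For a time-indexed reward $r$ (values $-\infty$ allowed), the MaxEnt RL objective is $J(\pi,r)=\mathbb{E}_\pi[\sum_{t=1}^T r_t(s_t,a_t)]+\mathcal{H}_\pi[a\mid s]$ with $\mathcal{H}_\pi[a\mid s]=\mathbb{E}_\pi[-\sum_{t=1}^T\log\pi(a_t\mid s_t)]$ ($0\log0=0$). *)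

(* Defs.v *)
From mathcomp Require Import all_boot.
From Stdlib Require Import Reals ClassicalEpsilon.
Set Implicit Arguments.
Unset Strict Implicit.
Unset Printing Implicit Defensive.

Inductive ER : Type := Fin (x : R) | NegInf.

Definition ERplus (x y : ER) : ER :=
  match x, y with Fin a, Fin b => Fin (a + b)%R | _, _ => NegInf end.

Definition ERle (x y : ER) : Prop :=
  match x, y with
  | NegInf, _ => True
  | Fin _, NegInf => False
  | Fin a, Fin b => (a <= b)%R
  end.

(* scaling by a probability weight, with the convention 0 * (-oo) = 0 *)
Definition ERscale (p : R) (x : ER) : ER :=
  match x with
  | Fin a => Fin (p * a)%R
  | NegInf => if Req_EM_T p 0 then Fin 0%R else NegInf
  end.

Definition is_glbER (E : ER -> Prop) (v : ER) : Prop :=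
  (forall y, E y -> ERle v y) /\
  (forall w, (forall y, E y -> ERle w y) -> ERle w v).

(* infimum of a set of reals, taking values in [-oo, oo)
   (it exists for nonempty sets; NegInf when unbounded below) *)
Definition ERinf (E : R -> Prop) : ER :=
  epsilon (inhabits NegInf) (is_glbER (fun v => exists x, E x /\ v = Fin x)).

Section MDP.
Variables (S A : finType) (T : nat).

(* trajectories (s_1,a_1),...,(s_T,a_T); time t = 1..T is the ordinal t-1 *)
Definition traj := {ffun 'I_T -> S * A}.

(* Markov, time-dependent policy: pi t s a = pi_t(a | s) *)
Definition policy := 'I_T -> S -> A -> R.

Definition is_policy (pi : policy) : Prop :=
  (forall t s a, (0 <= pi t s a)%R) /\
  (forall t s, \big[Rplus/0%R]_(a : A) pi t s a = 1%R).

Variables (p1 : S -> R) (p : S -> A -> S -> R). (* p s a s' = p(s'|s,a) *)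

(* initial-distribution / transition factor at time t *)
Definition dyn_factor (tau : traj) (t : 'I_T) : R :=
  match nat_of_ord t with
  | 0 => p1 (tau t).1
  | k.+1 => match @insub nat (fun n => n < T) 'I_T k with
            | Some j => p (tau j).1 (tau j).2 (tau t).1
            | None => 1%R
            end
  end.

Definition traj_prob (pi : policy) (tau : traj) : R :=
  \big[Rmult/1%R]_(t : 'I_T) (dyn_factor tau t * pi t (tau t).1 (tau t).2)%R.

Definition ExpR (pi : policy) (F : traj -> R) : R :=
  \big[Rplus/0%R]_(tau : traj) (traj_prob pi tau * F tau)%R.

Definition ExpER (pi : policy) (F : traj -> ER) : ER :=
  \big[ERplus/Fin 0%R]_(tau : traj) ERscale (traj_prob pi tau) (F tau).

(* H_pi[a|s] = E_pi[ - sum_t log pi_t(a_t|s_t) ]; 0 log 0 = 0 holds since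
   any trajectory with pi_t(a_t|s_t) = 0 has probability 0. *)
Definition entropy (pi : policy) : R :=
  ExpR pi (fun tau => (- \big[Rplus/0%R]_(t : 'I_T) ln (pi t (tau t).1 (tau t).2))%R).

Definition J (pi : policy) (r : 'I_T -> S -> A -> ER) : ER :=
  ERplus (ExpER pi (fun tau => \big[ERplus/Fin 0%R]_(t : 'I_T) r t (tau t).1 (tau t).2))
         (Fin (entropy pi)).

Definition ret (pi : policy) (r' : S -> A -> R) : R :=
  ExpR pi (fun tau => \big[Rplus/0%R]_(t : 'I_T) r' (tau t).1 (tau t).2).

Definition robust (Rset : (S -> A -> R) -> Prop) (pi : policy) : ER :=
  ERinf (fun v => exists r', Rset r' /\ v = ret pi r').

Definition argmax_J (r : 'I_T -> S -> A -> ER) (pi : policy) : Prop :=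
  is_policy pi /\ forall pi', is_policy pi' -> ERle (J pi' r) (J pi r).

Definition argmax_robust (Rset : (S -> A -> R) -> Prop) (pi : policy) : Prop :=
  is_policy pi /\ forall pi', is_policy pi' -> ERle (robust Rset pi') (robust Rset pi).

End MDP.

(* Main.v *)
From HB Require Import structures.
Require Import Defs.
From mathcomp Require Import all_boot.
From Stdlib Require Import Reals Lra ClassicalEpsilon Classical FunctionalExtensionality.
From mathcomp Require Import Rstruct.
Set Implicit Arguments.
Unset Strict Implicit.
Unset Printing Implicit Defensive.

Local Open Scope R_scope.


Lemma prod_ge0 (I : finType) (P : pred I) (g : I -> R) :
  (forall i, P i -> 0 <= g i) -> 0 <= \big[Rmult/1]_(i | P i) g i.
Proof. move=> H; apply: (big_ind (fun x => 0 <= x)) => //; [lra| move=> x y; apply Rmult_le_pos]. Qed.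

Lemma sum_ge0 (I : finType) (P : pred I) (g : I -> R) :
  (forall i, P i -> 0 <= g i) -> 0 <= \big[Rplus/0]_(i | P i) g i.
Proof. move=> H; apply: (big_ind (fun x => 0 <= x)) => //; [lra| move=> x y; lra]. Qed.

Lemma sum_le (I : finType) (P : pred I) (f g : I -> R) :
  (forall i, P i -> f i <= g i) -> \big[Rplus/0]_(i | P i) f i <= \big[Rplus/0]_(i | P i) g i.
Proof. move=> H; apply: (big_ind2 (fun x y => x <= y)) => //; [lra| move=> x1 x2 y1 y2; lra]. Qed.

Lemma prod_neq0 (I : finType) (g : I -> R) :
  \big[Rmult/1]_(i : I) g i <> 0 -> forall i, g i <> 0.
Proof. move=> H i Hi; apply: H; rewrite (bigD1 i) //= Hi; ring. Qed.

Lemma sum0_each (I : finType) (g : I -> R) :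
  (forall i, 0 <= g i) -> \big[Rplus/0]_(i : I) g i = 0 -> forall i, g i = 0.
Proof.
move=> H Hs i; move: Hs; rewrite (bigD1 i) //=.
have := @sum_ge0 I (fun j => j != i) g (fun j _ => H j); have := H i; lra.
Qed.

Definition upd (S A : finType) (T : nat) (tau : traj S A T) (j : 'I_T) (x : S * A) : traj S A T :=
  [ffun t => if t == j then x else tau t].

Lemma dyn_factor_ext (S A : finType) (T : nat) p1 p (tau tau' : traj S A T) (t : 'I_T) :
  tau t = tau' t -> (forall j : 'I_T, (nat_of_ord j).+1 = t -> tau j = tau' j) ->
  dyn_factor p1 p tau t = dyn_factor p1 p tau' t.
Proof.
move=> Ht Hj; rewrite /dyn_factor Ht.
case E: (nat_of_ord t) => [|k] //.
case: insubP => [j _ Hjk|] //; rewrite (Hj j) // Hjk E //.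
Qed.

Lemma dyn_ge0 (S A : finType) (T : nat) (p1 : S -> R) p
  (hp1 : forall s, 0 <= p1 s) (hp : forall s a s', 0 <= p s a s')
  (tau : traj S A T) t : 0 <= dyn_factor p1 p tau t.
Proof. rewrite /dyn_factor; case: (nat_of_ord t) => [|k] //; case: insubP => * //; lra. Qed.

Lemma traj_prob_ge0 (S A : finType) (T : nat) (p1 : S -> R) p
  (hp1 : forall s, 0 <= p1 s) (hp : forall s a s', 0 <= p s a s')
  (pi : policy S A T) (hpi : is_policy pi) tau : 0 <= traj_prob p1 p pi tau.
Proof.
apply: prod_ge0 => t _; apply: Rmult_le_pos; first exact: dyn_ge0.
by case: hpi.
Qed.

Lemma dyn_upd_sum (S A : finType) (T : nat) (p1 : S -> R) p
  (hp1_sum : \big[Rplus/0]_(s : S) p1 s = 1)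
  (hp_sum : forall s a, \big[Rplus/0]_(s' : S) p s a s' = 1)
  (tau : traj S A T) (j : 'I_T) :
  exists c : S -> R, \big[Rplus/0]_(s : S) c s = 1 /\
    forall x, dyn_factor p1 p (upd tau j x) j = c x.1.
Proof.
case: j => k Hk; rewrite /dyn_factor /=.
case: k Hk => [|k] Hk.
  by exists p1; split => // x; rewrite /upd ffunE eqxx.
case: insubP => [j' _ Hj'|/negP []]; last by apply: ltnW.
exists (p (tau j').1 (tau j').2); split => // x.
rewrite /upd !ffunE eqxx.
have -> : (j' == Ordinal Hk) = false.
  apply/eqP => E; move: Hj'; rewrite E /=; elim: k {Hk E} => // k IH; case.
  done.
done.
Qed.
Definition tailP (S A : finType) (T : nat) (x0 : S * A) (k : nat) (tau : traj S A T) : bool :=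
  [forall t : 'I_T, (k <= t)%nat ==> (tau t == x0)].

Definition fac (S A : finType) (T : nat) (p1 : S -> R) p (pi : policy S A T) (tau : traj S A T) (t : 'I_T) : R :=
  dyn_factor p1 p tau t * pi t (tau t).1 (tau t).2.

Lemma mass_step (S A : finType) (T : nat) (p1 : S -> R) p
  (hp1_sum : \big[Rplus/0]_(s : S) p1 s = 1)
  (hp_sum : forall s a, \big[Rplus/0]_(s' : S) p s a s' = 1)
  (pi : policy S A T) (hpi : is_policy pi) (x0 : S * A) :
  forall k, (k <= T)%nat ->
  \big[Rplus/0]_(tau | tailP x0 k tau) \big[Rmult/1]_(t : 'I_T | (t < k)%nat) fac p1 p pi tau t = 1.
Proof.
elim=> [_|k IH Hk].
  rewrite (big_pred1 [ffun=> x0]).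
    by rewrite big_pred0.
  move=> tau /=; apply/forallP/eqP => [H|->].
    by apply/ffunP => t; rewrite ffunE; apply/eqP; have := H t.
  by move=> t; rewrite ffunE eqxx.
set j : 'I_T := Ordinal Hk.
have Qs : forall tau, \big[Rmult/1]_(t : 'I_T | (t < k.+1)%nat) fac p1 p pi tau t =
    fac p1 p pi tau j * \big[Rmult/1]_(t : 'I_T | (t < k)%nat) fac p1 p pi tau t.
  move=> tau; rewrite (bigD1 j) //=; congr (_ * _); apply: eq_bigl => t.
  rewrite ltnS; apply/andP/idP => [[H1 H2]|H].
    by rewrite ltn_neqAle H1 andbT; apply: contraNneq H2 => E; apply/eqP/val_inj.
  split; first exact: ltnW.
  by apply/eqP => E; move: H; rewrite E /= ltnn.
under eq_bigr do rewrite Qs.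
rewrite (partition_big (fun tau : traj S A T => tau j) xpredT) //=.
have Hx : forall x, \big[Rplus/0]_(tau | tailP x0 k.+1 tau && (tau j == x))
      (fac p1 p pi tau j * \big[Rmult/1]_(t : 'I_T | (t < k)%nat) fac p1 p pi tau t) =
    \big[Rplus/0]_(tau | tailP x0 k tau)
      (fac p1 p pi (upd tau j x) j * \big[Rmult/1]_(t : 'I_T | (t < k)%nat) fac p1 p pi tau t).
  move=> x.
  rewrite (reindex_onto (fun tau => upd tau j x) (fun tau => upd tau j x0)); last first.
    move=> tau /andP [_ /eqP Hj]; apply/ffunP => t; rewrite !ffunE.
    by case: (t =P j) => [->|].
  apply: eq_big => tau.
    apply/idP/idP.
      move=> /andP [/andP [/forallP H _] /eqP E]; apply/forallP => t; apply/implyP => Ht.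
      case: (t =P j) => [Etj|Ntj].
        by rewrite -E !ffunE Etj eqxx.
      have Hkt : (k.+1 <= t)%nat.
        rewrite ltn_neqAle Ht; apply/andP; split => //; apply/eqP => Etk; apply: Ntj; apply: val_inj => /=; by rewrite -Etk.
      by have := H t; rewrite Hkt /= ffunE; case: (t =P j).
    move=> /forallP H; apply/andP; split; first (apply/andP; split).
      apply/forallP => t; rewrite !ffunE; apply/implyP => Ht; case: (t =P j) => [Etj|Ntj].
        by move: Ht; rewrite Etj /= ltnn.
      by have := H t; rewrite (ltnW Ht).
      by rewrite ffunE eqxx.
    apply/eqP/ffunP => t; rewrite !ffunE; case: (t =P j) => [->|] //.
    by have := H j; rewrite /= leqnn => /eqP ->.
  move=> _; congr (_ * _); apply: eq_bigr => t Ht.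
  have Ntj : (t == j) = false.
    by apply/eqP => E; move: Ht; rewrite E /= ltnn.
  rewrite /fac; congr (_ * _).
    apply: dyn_factor_ext; first by rewrite ffunE Ntj.
    move=> j' Hj'; rewrite ffunE; case: (j' =P j) => // E.
    by move: Ht; rewrite -Hj' E /= => /ltnW; rewrite ltnn.
  by rewrite ffunE Ntj.
under eq_bigr do rewrite Hx.
rewrite exchange_big /=.
rewrite -[RHS](IH (ltnW Hk)); apply: eq_bigr => tau _.
rewrite -big_distrl /=.
have [c [Hc Hcx]] := dyn_upd_sum hp1_sum hp_sum tau j.
suff -> : \big[Rplus/0]_(x : S * A) fac p1 p pi (upd tau j x) j = 1 by ring.
under eq_bigr do rewrite /fac Hcx ffunE eqxx.
rewrite -(pair_big xpredT xpredT (fun s a => c s * pi j s a)) /=.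
rewrite -Hc; apply: eq_bigr => s _.
rewrite -big_distrr /=; case: hpi => _ ->; ring.
Qed.

Lemma traj_mass (S A : finType) (T : nat) (p1 : S -> R) p
  (hp1_sum : \big[Rplus/0]_(s : S) p1 s = 1)
  (hp_sum : forall s a, \big[Rplus/0]_(s' : S) p s a s' = 1)
  (pi : policy S A T) (hpi : is_policy pi) (x0 : S * A) :
  \big[Rplus/0]_(tau : traj S A T) traj_prob p1 p pi tau = 1.
Proof.
rewrite -(mass_step hp1_sum hp_sum hpi x0 (leqnn T)).
apply: eq_big => tau.
  by symmetry; apply/forallP => t; rewrite leqNgt ltn_ord.
by move=> _; rewrite /traj_prob; apply: eq_bigl => t; rewrite ltn_ord.
Qed.

Lemma bigER_fin (I : finType) (P : pred I) (g : I -> R) :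
  \big[ERplus/Fin 0]_(i | P i) Fin (g i) = Fin (\big[Rplus/0]_(i | P i) g i).
Proof. by rewrite (big_morph Fin (id1 := Fin 0) (op1 := ERplus)). Qed.

Lemma bigER_notneg (I : eqType) (s : seq I) (P : pred I) (F : I -> ER) :
  \big[ERplus/Fin 0]_(i <- s | P i) F i <> NegInf -> forall i, i \in s -> P i -> F i <> NegInf.
Proof.
elim: s => [|x s IH] H i //; rewrite in_cons => /orP [/eqP ->|Hi] Pi; move: H; rewrite big_cons.
  by rewrite Pi; case: (F x) => //; case: (\big[ERplus/Fin 0]_(j <- s | P j) F j).
case: (P x) => H; last by apply: IH.
apply: IH => //; move: H; case: (\big[ERplus/Fin 0]_(j <- s | P j) F j) => //; by case: (F x).
Qed.

Lemma ln_prod (I : finType) (g : I -> R) :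
  (forall i, 0 < g i) -> ln (\big[Rmult/1]_(i : I) g i) = \big[Rplus/0]_(i : I) ln (g i).
Proof.
move=> H.
have : 0 < \big[Rmult/1]_(i : I) g i /\ ln (\big[Rmult/1]_(i : I) g i) = \big[Rplus/0]_(i : I) ln (g i).
  apply: (big_ind2 (fun x y => 0 < x /\ ln x = y)).
  - by split; [lra| exact: ln_1].
  - move=> x1 x2 y1 y2 [h1 e1] [h2 e2]; split; first exact: Rmult_lt_0_compat.
    by rewrite ln_mult // e1 e2.
  - by move=> i _; split.
by case.
Qed.

Lemma prod_gt0 (I : finType) (g : I -> R) :
  (forall i, 0 < g i) -> 0 < \big[Rmult/1]_(i : I) g i.
Proof. move=> H; apply: (big_ind (fun x => 0 < x)) => //; [lra| move=> x y; apply Rmult_lt_0_compat]. Qed.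

Lemma gibbs_pt a b : 0 < a -> 0 < b ->
  b * (ln a - ln b) <= a - b /\ (b * (ln a - ln b) = a - b -> a = b).
Proof.
move=> Ha Hb; set y := ln a - ln b.
have Ey : exp y = a / b.
  rewrite /y /Rminus exp_plus exp_Ropp !exp_ln //.
case: (Req_dec y 0) => Hy.
  have Eab : a = b.
    have : exp y = 1 by rewrite Hy exp_0.
    rewrite Ey => E; field_simplify in E; try lra.
    have : a = b * 1 by rewrite -E; field; lra.
    lra.
  by rewrite Hy Eab; split; [lra|].
have := exp_ineq1 y Hy; rewrite Ey => Hlt.
have : b * (1 + y) < a.
  have -> : a = b * (a / b) by field; lra.
  apply: Rmult_lt_compat_l => //.
move=> H; split; lra.
Qed.

Definition rstar (S A : finType) (T : nat) (pis : policy S A T) : 'I_T -> S -> A -> ER :=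
  fun t s a => match Rlt_dec 0 (pis t s a) with left _ => Fin (ln (pis t s a)) | right _ => NegInf end.

Definition Lg (S A : finType) (T : nat) (pi : policy S A T) (tau : traj S A T) : R :=
  \big[Rplus/0]_(t : 'I_T) ln (pi t (tau t).1 (tau t).2).

Definition Fr (S A : finType) (T : nat) (pis : policy S A T) (tau : traj S A T) : ER :=
  \big[ERplus/Fin 0]_(t : 'I_T) rstar pis t (tau t).1 (tau t).2.

Lemma Fr_pos (S A : finType) (T : nat) (pis : policy S A T) (tau : traj S A T) :
  (forall t, 0 < pis t (tau t).1 (tau t).2) -> Fr pis tau = Fin (Lg pis tau).
Proof.
move=> H; rewrite /Fr /Lg -bigER_fin; apply: eq_bigr => t _.
by rewrite /rstar; case: Rlt_dec => // /(_ (H t)).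
Qed.

Lemma Fr_fin (S A : finType) (T : nat) (pis : policy S A T) (tau : traj S A T) :
  Fr pis tau <> NegInf -> forall t, 0 < pis t (tau t).1 (tau t).2.
Proof.
move=> H t; have := bigER_notneg H (mem_index_enum t) is_true_true.
by rewrite /rstar; case: Rlt_dec.
Qed.

Lemma term_eq (S A : finType) (T : nat) (pis : policy S A T) (q : R) (tau : traj S A T) :
  q = 0 \/ Fr pis tau <> NegInf -> ERscale q (Fr pis tau) = Fin (q * Lg pis tau).
Proof.
case=> [->|H].
  destruct (Fr pis tau) as [a|]; rewrite /ERscale; first by rewrite !Rmult_0_l.
  repeat match goal with |- context [Req_dec_T ?a ?b] => destruct (Req_dec_T a b) | |- context [Req_EM_T ?a ?b] => destruct (Req_EM_T a b) end; [by rewrite Rmult_0_l|by []].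
by rewrite Fr_pos //; apply: Fr_fin.
Qed.

Lemma Jform (S A : finType) (T : nat) p1 p (pis pi : policy S A T) :
  (forall tau, traj_prob p1 p pi tau = 0 \/ Fr pis tau <> NegInf) ->
  J p1 p pi (rstar pis) =
  Fin (\big[Rplus/0]_(tau : traj S A T) (traj_prob p1 p pi tau * (Lg pis tau - Lg pi tau))).
Proof.
move=> H; rewrite /J /ExpER.
have -> : \big[ERplus/Fin 0]_(tau : traj S A T) ERscale (traj_prob p1 p pi tau)
     (\big[ERplus/Fin 0]_(t : 'I_T) rstar pis t (tau t).1 (tau t).2) =
   \big[ERplus/Fin 0]_(tau : traj S A T) Fin (traj_prob p1 p pi tau * Lg pis tau).
  apply: eq_bigr => tau _; exact: (term_eq (H tau)).
rewrite bigER_fin /entropy /ExpR /=; congr Fin.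
rewrite -big_split /=; apply: eq_bigr => tau _; rewrite /Lg /=; by rewrite /Rminus Rmult_plus_distr_l.
Qed.

Lemma sum_sub (I : finType) (f g : I -> R) :
  \big[Rplus/0]_(i : I) (f i - g i) = \big[Rplus/0]_(i : I) f i - \big[Rplus/0]_(i : I) g i.
Proof.
rewrite /Rminus big_split /=; congr (_ + _).
by rewrite (big_morph Ropp Ropp_plus_distr Ropp_0).
Qed.

Lemma partC (S A : finType) (T : nat) (p1 : S -> R) p
  (hp1_nonneg : forall s, 0 <= p1 s)
  (hp1_sum : \big[Rplus/0]_(s : S) p1 s = 1)
  (hp_nonneg : forall s a s', 0 <= p s a s')
  (hp_sum : forall s a, \big[Rplus/0]_(s' : S) p s a s' = 1)
  (x0 : S * A) (pis pi : policy S A T) (hpis : is_policy pis) (hpi : is_policy pi)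
  (HJ : ERle (J p1 p pis (rstar pis)) (J p1 p pi (rstar pis))) :
  forall tau, traj_prob p1 p pi tau = traj_prob p1 p pis tau.
Proof.
set q := traj_prob p1 p pi; set qs := traj_prob p1 p pis.
have qge0 : forall tau, 0 <= q tau by move=> tau; apply: traj_prob_ge0.
have qsge0 : forall tau, 0 <= qs tau by move=> tau; apply: traj_prob_ge0.
have facpos : forall (pi0 : policy S A T), is_policy pi0 -> forall tau,
    traj_prob p1 p pi0 tau <> 0 -> forall t,
    0 < dyn_factor p1 p tau t /\ 0 < pi0 t (tau t).1 (tau t).2.
  move=> pi0 [h0 _] tau Hq t; have Hne := @prod_neq0 _ _ Hq t.
  have h1 := dyn_ge0 hp1_nonneg hp_nonneg tau t; have h2 := h0 t (tau t).1 (tau t).2.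
  split.
    case: (Rle_lt_or_eq_dec _ _ h1) => // E; by rewrite -E Rmult_0_l in Hne.
  case: (Rle_lt_or_eq_dec _ _ h2) => // E; by rewrite -E Rmult_0_r in Hne.
have HJs : J p1 p pis (rstar pis) = Fin 0.
  rewrite Jform; last first.
    move=> tau; case: (Req_dec (qs tau) 0) => Hq; [by left|right].
    rewrite Fr_pos; first by [].
    by move=> t; have [] := facpos pis hpis tau Hq t.
  congr Fin; apply: big1 => tau _; rewrite Rminus_diag; ring.
move: HJ; rewrite HJs.
have Hcond : ERle (Fin 0) (J p1 p pi (rstar pis)) ->
    forall tau, q tau = 0 \/ Fr pis tau <> NegInf.
  move=> H tau; case: (Req_dec (q tau) 0) => Hq; [by left|right] => EF.
  move: H; rewrite /J /ExpER.
  case: (classic (\big[ERplus/Fin 0]_(tau0 : traj S A T) ERscale (traj_prob p1 p pi tau0)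
      (\big[ERplus/Fin 0]_(t : 'I_T) rstar pis t (tau0 t).1 (tau0 t).2) = NegInf)) => [->//|Hne].
  have := bigER_notneg Hne (mem_index_enum tau) is_true_true.
  rewrite /= -/(Fr pis tau) EF /=.
  repeat match goal with |- context [Req_dec_T ?a ?b] => destruct (Req_dec_T a b) | |- context [Req_EM_T ?a ?b] => destruct (Req_EM_T a b) end; first [done | by move=> _; apply: Hq | by move=> H; apply: H].
move=> HJ; have Hc := Hcond HJ; move: HJ; rewrite Jform //= => HJ.
set h := fun tau => qs tau - q tau - q tau * (Lg pis tau - Lg pi tau).
have hpt : forall tau, 0 <= h tau /\ (h tau = 0 -> q tau = qs tau).
  move=> tau; rewrite /h.
  case: (Req_dec (q tau) 0) => Hq.
    rewrite Hq; split; first by have := qsge0 tau; lra.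
    by move=> E; lra.
  have Hqp : 0 < q tau by have := qge0 tau; lra.
  have HF : Fr pis tau <> NegInf by case: (Hc tau).
  have Hsp := Fr_fin HF.
  have Hfp := facpos pi hpi tau Hq.
  have Hqsp : 0 < qs tau.
    apply: prod_gt0 => t; have [d1 _] := Hfp t; exact: Rmult_lt_0_compat.
  have EL : Lg pis tau - Lg pi tau = ln (qs tau) - ln (q tau).
    rewrite /qs /q /traj_prob !ln_prod; last first.
      by move=> t; have [d1 d2] := Hfp t; apply: Rmult_lt_0_compat; [done|first [done|apply: Hsp]].
      by move=> t; have [d1 d2] := Hfp t; apply: Rmult_lt_0_compat; [done|first [done|apply: Hsp]].
    have Es : forall (pi0 : policy S A T), (forall t, 0 < pi0 t (tau t).1 (tau t).2) ->
      \big[Rplus/0]_(t : 'I_T) ln (dyn_factor p1 p tau t * pi0 t (tau t).1 (tau t).2) =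
      \big[Rplus/0]_(t : 'I_T) ln (dyn_factor p1 p tau t) + Lg pi0 tau.
      move=> pi0 Hp0; rewrite /Lg -big_split /=; apply: eq_bigr => t _.
      by rewrite ln_mult //; have [] := Hfp t.
    rewrite (Es pis Hsp) (Es pi); last by move=> t; have [] := Hfp t.
    set D := \big[Rplus/0]_(t : 'I_T) ln (dyn_factor p1 p tau t).
    lra.
  rewrite EL; have [G1 G2] := gibbs_pt Hqsp Hqp.
  split; first lra.
  move=> E; symmetry; apply: G2; lra.
have Hsum : \big[Rplus/0]_(tau : traj S A T) h tau = 0.
  apply: Rle_antisym; last by apply: sum_ge0 => tau _; case: (hpt tau).
  rewrite /h !sum_sub (traj_mass hp1_sum hp_sum hpis x0) (traj_mass hp1_sum hp_sum hpi x0).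
  fold q in HJ; apply: Rle_trans; [apply: (Rplus_le_compat_l (1-1)); apply: Ropp_le_contravar; exact: HJ|lra].
move=> tau; have := sum0_each (fun tau => proj1 (hpt tau)) Hsum tau.
by case: (hpt tau) => _ H /H.
Qed.

Lemma ERle_trans x y z : ERle x y -> ERle y z -> ERle x z.
Proof. case: x => [a|]; case: y => [b|]; case: z => [c|] //=; lra. Qed.

Lemma ERle_refl x : ERle x x.
Proof. case: x => [a|] //=; lra. Qed.

Lemma ERle_total x y : ERle x y \/ ERle y x.
Proof. case: x => [a|]; case: y => [b|] /=; try by [left|right]. lra. Qed.

Lemma glb_exists (E : R -> Prop) : (exists x, E x) ->
  exists v, is_glbER (fun v => exists x, E x /\ v = Fin x) v.
Proof.
move=> [x0 Hx0].
case: (classic (exists m, forall x, E x -> m <= x)) => [[m Hm]|Hno].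
  have Hb : bound (fun y => E (- y)) by exists (- m) => y Hy; have := Hm _ Hy; lra.
  have Hne : exists y, E (- y) by exists (- x0); rewrite Ropp_involutive.
  have [l [Hl1 Hl2]] := completeness _ Hb Hne.
  exists (Fin (- l)); split.
    move=> y [x [Ex ->]] /=; have : - x <= l by apply: Hl1; rewrite Ropp_involutive.
    lra.
  case=> [c|] // Hc /=.
  have : l <= - c.
    apply: Hl2 => y Ey; have := Hc (Fin (- y)) (ex_intro _ (- y) (conj Ey erefl)); simpl; lra.
  lra.
exists NegInf; split => // [[c|]] // Hc; apply: Hno; exists c => x Ex.
exact: (Hc (Fin x) (ex_intro _ x (conj Ex erefl))).
Qed.

Lemma ERinf_spec (E : R -> Prop) : (exists x, E x) ->
  is_glbER (fun v => exists x, E x /\ v = Fin x) (ERinf E).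
Proof.
move=> H; rewrite /ERinf; apply: epsilon_spec; exact: glb_exists.
Qed.

Lemma robust_ge (S A : finType) (T : nat) (p1 : S -> R) p Rset (hR : exists r' : S -> A -> R, Rset r')
  (pi : policy S A T) c :
  ERle (Fin c) (robust p1 p Rset pi) <-> forall r', Rset r' -> c <= ret p1 p pi r'.
Proof.
have [r0 Hr0] := hR.
have [H1 H2] := ERinf_spec (ex_intro (fun v => exists r', Rset r' /\ v = ret p1 p pi r') (ret p1 p pi r0) (ex_intro _ r0 (conj Hr0 erefl))).
split.
  move=> Hc r' Hr'; have := H1 (Fin (ret p1 p pi r')) (ex_intro _ _ (conj (ex_intro _ r' (conj Hr' erefl)) erefl)).
  by move=> H; have := ERle_trans Hc H.
move=> Hc; apply: H2 => y [x [[r' [Hr' ->]] ->]] /=; exact: Hc.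
Qed.


Lemma pol_le1 (S A : finType) (T : nat) (sig : policy S A T) :
  is_policy sig -> forall t s a, sig t s a <= 1.
Proof.
move=> [h0 h1] t s a; rewrite -(h1 t s) (bigD1 a) //=.
have := @sum_ge0 A (fun b => b != a) (sig t s) (fun b _ => h0 t s b); lra.
Qed.

Local Close Scope R_scope.

From mathcomp Require Import all_algebra.
From mathcomp Require Import all_classical all_reals all_analysis Rstruct_topology.
Import ArrowAsProduct.
Local Open Scope classical_set_scope.

Lemma cont_sum (X : topologicalType) (I : Type) (s : seq I) (P : pred I) (g : I -> X -> R) :
  (forall i, continuous (g i)) -> continuous (fun x => \big[Rplus/0%coqR]_(i <- s | P i) g i x).
Proof.
move=> H; elim: s => [|i s IH].
  have -> : (fun x => \big[Rplus/0%coqR]_(i <- [::] | P i) g i x) = (fun=> 0%coqR).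
    by apply: funext => x; rewrite big_nil.
  exact: cst_continuous.
have -> : (fun x => \big[Rplus/0%coqR]_(j <- i :: s | P j) g j x) =
   (fun x => if P i then Rplus (g i x) (\big[Rplus/0%coqR]_(j <- s | P j) g j x) else \big[Rplus/0%coqR]_(j <- s | P j) g j x).
  by apply: funext => x; rewrite big_cons.
case: (P i) => //.
move=> x; have Z := (@continuousD R R^o X _ _ x (H i x) (IH x)). exact: Z.
Qed.

Lemma cont_mul (X : topologicalType) (f g : X -> R) :
  continuous f -> continuous g -> continuous (fun x => Rmult (f x) (g x)).
Proof. move=> Hf Hg x; have Z := (@continuousM R X _ _ x (Hf x) (Hg x)). exact: Z. Qed.

Lemma cont_prod (X : topologicalType) (I : Type) (s : seq I) (P : pred I) (g : I -> X -> R) :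
  (forall i, continuous (g i)) -> continuous (fun x => \big[Rmult/1%coqR]_(i <- s | P i) g i x).
Proof.
move=> H; elim: s => [|i s IH].
  have -> : (fun x => \big[Rmult/1%coqR]_(i <- [::] | P i) g i x) = (fun=> 1%coqR).
    by apply: funext => x; rewrite big_nil.
  exact: cst_continuous.
have -> : (fun x => \big[Rmult/1%coqR]_(j <- i :: s | P j) g j x) =
   (fun x => if P i then Rmult (g i x) (\big[Rmult/1%coqR]_(j <- s | P j) g j x) else \big[Rmult/1%coqR]_(j <- s | P j) g j x).
  by apply: funext => x; rewrite big_cons.
case: (P i) => //.
exact: cont_mul.
Qed.

Lemma cont_proj (K : finType) (k : K) : continuous (fun f : K -> R => f k).
Proof. exact: (@proj_continuous K (fun=> R) k). Qed.

Definition unflat (S A : finType) (T : nat) (f : ('I_T * S * A)%type -> R) : policy S A T :=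
  fun t s a => f (t, s, a).

Lemma cont_ret (S A : finType) (T : nat) (p1 : S -> R) p (r' : S -> A -> R) :
  continuous (fun f : ('I_T * S * A)%type -> R => ret p1 p (unflat f) r').
Proof.
rewrite /ret /ExpR /traj_prob /=.
apply: cont_sum => tau; apply: cont_mul; last exact: cst_continuous.
apply: cont_prod => t; apply: cont_mul; first exact: cst_continuous.
exact: (@cont_proj _ (t, (tau t).1, (tau t).2)).
Qed.

Lemma closed_pre_ge (X : topologicalType) (g : X -> R) (c : R) :
  continuous g -> closed [set x | Rle c (g x)].
Proof.
move=> Hg.
have -> : [set x | Rle c (g x)] = g @^-1` [set y : R | (c <= y)%R].
  by apply/seteqP; split => x /= H; apply/RleP.
by apply: preimage_closed => [x _|]; [exact: Hg| exact: closed_ge].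
Qed.

Lemma closed_pre_eq (X : topologicalType) (g : X -> R) (c : R) :
  continuous g -> closed [set x | g x = c].
Proof.
move=> Hg.
have -> : [set x | g x = c] = g @^-1` [set y : R | y = c] by [].
by apply: preimage_closed => [x _|]; [exact: Hg| exact: closed_eq].
Qed.

Lemma exists_opt (S A : finType) (T : nat) (p1 : S -> R) (p : S -> A -> S -> R)
  (hp1_nonneg : forall s, (0 <= p1 s)%coqR)
  (hp_nonneg : forall s a s', (0 <= p s a s')%coqR)
  (Rset : (S -> A -> R) -> Prop) (hR : exists r', Rset r') :
  (exists sigma : policy S A T, is_policy sigma) ->
  exists pis : policy S A T, is_policy pis /\
    forall pi : policy S A T, is_policy pi -> ERle (robust p1 p Rset pi) (robust p1 p Rset pis).
Proof.
move=> [s0 hs0].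
case: (Classical_Prop.classic (exists sig : policy S A T, is_policy sig /\ robust p1 p Rset sig <> NegInf))
  => [[sig1 [hs1 Hn1]]|Hall]; last first.
  exists s0; split => // pi hpi; case E: (robust p1 p Rset pi) => [c|] //=.
  by case: Hall; exists pi; split => //; rewrite E.
pose K := ('I_T * S * A)%type.
pose C0 := [set f : K -> R | forall k, `[0%R, 1%R]%classic (f k)].
have C0c : compact C0 := tychonoff (fun k : K => @segment_compact R 0%R 1%R).
pose D := [set sig : policy S A T | is_policy sig /\ robust p1 p Rset sig <> NegInf].
pose G := fun sig : policy S A T => [set f : K -> R | is_policy (unflat f) /\
   ERle (robust p1 p Rset sig) (robust p1 p Rset (unflat f))].
pose B := fun sig => C0 `&` G sig.
have flatB : forall sig, D sig -> B sig (fun k : K => sig k.1.1 k.1.2 k.2).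
  move=> sig [hsig _]; split; last by split => //; exact: ERle_refl.
  move=> [[t s] a] /=; rewrite in_itv /=; apply/andP; split; apply/RleP.
    by case: hsig.
  exact: pol_le1.
have Ffilt : Filter (filter_from D B).
  apply: filter_from_filter; first by exists sig1.
  move=> i j Di Dj; case: (ERle_total (robust p1 p Rset i) (robust p1 p Rset j)) => Hij.
    exists j => // f [C0f [pf Hf]]; split; split => //; split => //.
    exact: ERle_trans Hij Hf.
  exists i => // f [C0f [pf Hf]]; split; split => //; split => //.
  exact: ERle_trans Hij Hf.
have Fprop : ProperFilter (filter_from D B).
  apply: filter_from_proper => sig Dsig; exists (fun k : K => sig k.1.1 k.1.2 k.2).
  exact: flatB.
have [pstar [C0p clp]] := C0c (filter_from D B) Fprop (ex_intro2 _ _ sig1 (conj hs1 Hn1) (fun f => @proj1 _ _)).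
have Gp : forall sig, D sig -> G sig pstar.
  move=> sig [hsig Hn].
  have Gcl : closed (G sig).
    case E: (robust p1 p Rset sig) Hn => [c|] // _.
    have -> : G sig = [set f : K -> R | forall k, Rle 0 (f k)] `&`
       ([set f : K -> R | forall ts : 'I_T * S, \big[Rplus/0%coqR]_(a : A) f (ts.1, ts.2, a) = 1%coqR] `&`
        \bigcap_(r' in Rset) [set f : K -> R | Rle c (ret p1 p (unflat f) r')]).
      apply/seteqP; split => f /=.
        rewrite /G E /= => -[[h0 h1] Hc]; split.
          by move=> [[t s] a]; apply: h0.
        split; first by move=> [t s]; apply: h1.
        by move=> r' Hr'; exact: ((robust_ge p1 p hR (unflat f) c).1 Hc r' Hr').
      move=> [h0 [h1 Hc]]; rewrite /G E /=; split.
        by split; [move=> t s a; apply: (h0 (t, s, a)) | move=> t s; apply: (h1 (t, s))].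
      exact: ((robust_ge p1 p hR (unflat f) c).2 Hc).
    apply: closedI.
      have -> : [set f : K -> R | forall k, Rle 0 (f k)] =
          \bigcap_(k in [set: K]) [set f : K -> R | Rle 0 (f k)].
        by apply/seteqP; split => f /= H k; [move=> _; apply: H | apply: H].
      apply: closed_bigI => k _; apply: closed_pre_ge; exact: cont_proj.
    apply: closedI.
      have -> : [set f : K -> R | forall ts : 'I_T * S, \big[Rplus/0%coqR]_(a : A) f (ts.1, ts.2, a) = 1%coqR] =
          \bigcap_(ts in [set: 'I_T * S]) [set f : K -> R | \big[Rplus/0%coqR]_(a : A) f (ts.1, ts.2, a) = 1%coqR].
        by apply/seteqP; split => f /= H k; [move=> _; apply: H | apply: H].
      apply: closed_bigI => ts _; apply: closed_pre_eq.
      by apply: cont_sum => a; apply: cont_proj.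
    apply: closed_bigI => r' _; apply: closed_pre_ge; exact: cont_ret.
  apply: Gcl => U nU.
  have [f [[_ Gf] Uf]] := clp (B sig) U (ex_intro2 _ _ sig (conj hsig Hn) (fun f x => x)) nU.
  by exists f.
exists (unflat pstar); split; first by have [] := Gp sig1 (conj hs1 Hn1).
move=> pi hpi; case E: (robust p1 p Rset pi) => [c|] //.
have Dpi : D pi by split => //; rewrite E.
have [_ H] := Gp pi Dpi.
by rewrite E in H.
Qed.

Delimit Scope R_scope with R.
Theorem theorem3 (S A : finType) (T : nat) (hT : (0 < T)%N)
  (p1 : S -> R) (p : S -> A -> S -> R)
  (hp1_nonneg : forall s, (0 <= p1 s)%R)
  (hp1_sum : \big[Rplus/0%R]_(s : S) p1 s = 1%R)
  (hp_nonneg : forall s a s', (0 <= p s a s')%R)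
  (hp_sum : forall s a, \big[Rplus/0%R]_(s' : S) p s a s' = 1%R)
  (Rset : (S -> A -> R) -> Prop) (hR : exists r', Rset r') :
  exists r : 'I_T -> S -> A -> ER,
    forall pi : policy S A T,
      argmax_J p1 p r pi -> argmax_robust p1 p Rset pi.
Proof.
case: (Classical_Prop.classic (exists sigma : policy S A T, is_policy sigma)) => [Hex|Hno]; last first.
  by exists (fun _ _ _ => NegInf) => pi [hpi _]; case: Hno; exists pi.
have [pis [hpis Hopt]] := exists_opt hp1_nonneg hp_nonneg hR Hex.
have [s0 _] : exists s : S, True.
  apply: NNPP => Hs; move: hp1_sum; rewrite big1 => [|s _]; first lra.
  by case: Hs; exists s.
have [a0 _] : exists a : A, True.
  apply: NNPP => Ha; have [sigma [_ Hsig]] := Hex.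
  move: (Hsig (Ordinal hT) s0); rewrite big1 => [|a _]; first lra.
  by case: Ha; exists a.
exists (rstar pis) => pi [hpi Hmax]; split => // pi' hpi'.
have E := partC hp1_nonneg hp1_sum hp_nonneg hp_sum (s0, a0) hpis hpi (Hmax pis hpis).
have Eret : ret p1 p pi = ret p1 p pis.
  apply: functional_extensionality => r'; rewrite /ret /ExpR.
  by apply: eq_bigr => tau _; rewrite E.
by rewrite /robust Eret; apply: Hopt.
Qed.
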